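(* Let $\langle A,\to\rangle$ be a conditional algebra, and write $T=T_A$, with $u,v,w$ ranging over $\mathrm{Ul}(A)$ and $Y,Z$ over closed subsets of the Stone space $\mathrm{Ul}(A)$. Then: (A4) $a\to b\le c\to(a\to b)$ holds for all $a,b,c\in A$ iff for all $u,v,w,Y,Z$: $T(u,Y,v)$ and $T(v,Z,w)$ imply $T(u,Z,w)$; (A5) $a\wedge(a\to b)\le b$ holds for all $a,b$ iff $T(u,\{u\},u)$ for all $u$; (A6) $a\to b\le\neg b\to\neg a$ holds for all $a,b$ iff for all $u,v,Y$: $T(u,Y,v)$ implies there is $w\in Y$ with $T(u,\{v\},w)$; (A7) $\neg(a\to b)\le c\to\neg(a\to b)$ holds for all $a,b,c$ iff for all $u,v,w,Y,Z$: $T(u,Y,v)$ and $T(u,Z,w)$ imply $T(v,Z,w)$; (A8) $(1\to(\neg a\vee b))\wedge(b\to c)\le a\to c$ holds for all $a,b,c$ iff for all $u,v,Y,Z$: if $T(u,Y,v)$ and $T(u,\mathrm{Ul}(A))\cap Y\subseteq Z$, then $T(u,Z,v)$.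
   Context: A conditional algebra is $\langle A,\to\rangle$ with $A$ a Boolean algebra and $\to$ binary with $a\to1=1$, $(a\to b)\wedge(a\to c)=a\to(b\wedge c)$, $(a\vee b)\to c\le(a\to c)\wedge(b\to c)$. $\mathrm{Ul}(A)$ is the Stone space of ultrafilters; its closed sets are the $\varphi(F)=\{u:F\subseteq u\}$ for filters $F$ (including $F=A$, giving $\emptyset$). $D^{\to}_u(F)=\{b:\exists a\in F,\ a\to b\in u\}$; $T_A(u,Z,v)$ iff there is a filter $F$ with $Z=\varphi(F)$ and $D^{\to}_u(F)\subseteq v$; $T_A(u,Z)=\{v:T_A(u,Z,v)\}$. *)

(* Defs.v *)
From HB Require Import structures.
From mathcomp Require Import all_boot all_order.
Set Implicit Arguments. Unset Strict Implicit. Unset Printing Implicit Defensive.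
Import Order.TTheory.
Local Open Scope order_scope.

(* A Boolean algebra is a complemented distributive lattice with top and
   bottom: mathcomp's ctbDistrLatticeType.  Meet `&`, join `|`,
   complement ~`, top \top, bottom \bot. *)

Section CondAlg.
Context {disp : Order.disp_t} {A : ctbDistrLatticeType disp}.

Definition conditional_algebra (imp : A -> A -> A) : Prop :=
  [/\ (forall a, imp a \top = \top),
      (forall a b c, imp a b `&` imp a c = imp a (b `&` c)) &
      (forall a b c, imp (a `|` b) c <= imp a c `&` imp b c)].

(* filters (the improper filter A itself is allowed) *)
Definition is_filter (F : A -> Prop) : Prop :=
  [/\ F \top,
      (forall a b, F a -> a <= b -> F b) &
      (forall a b, F a -> F b -> F (a `&` b))].

Definition proper_filter (F : A -> Prop) : Prop := is_filter F /\ ~ F \bot.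

Definition is_ultrafilter (u : A -> Prop) : Prop :=
  proper_filter u /\
  forall F, proper_filter F -> (forall a, u a -> F a) -> forall a, F a -> u a.

Definition Ul := { u : A -> Prop | is_ultrafilter u }.

Definition ulmem (u : Ul) (a : A) : Prop := proj1_sig u a.

Definition phi (F : A -> Prop) : Ul -> Prop := fun w => forall a, F a -> ulmem w a.

Definition closed_Ul (Z : Ul -> Prop) : Prop :=
  exists F, is_filter F /\ forall w, Z w <-> phi F w.

Definition Dimp (imp : A -> A -> A) (u : Ul) (F : A -> Prop) : A -> Prop :=
  fun b => exists a, F a /\ ulmem u (imp a b).

Definition TA (imp : A -> A -> A) (u : Ul) (Z : Ul -> Prop) (v : Ul) : Prop :=
  exists F, is_filter F /\ (forall w, Z w <-> phi F w) /\
            (forall b, Dimp imp u F b -> ulmem v b).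

Definition TAset (imp : A -> A -> A) (u : Ul) (Z : Ul -> Prop) : Ul -> Prop :=
  fun v => TA imp u Z v.

Definition singleton_Ul (u : Ul) : Ul -> Prop := fun w => w = u.
Definition full_Ul : Ul -> Prop := fun _ => True.

End CondAlg.
Arguments Ul {disp} A.

(* Main.v *)
Require Import Defs.
From HB Require Import structures.
From mathcomp Require Import all_boot all_order.
From mathcomp Require Import boolp classical_sets.
From Stdlib Require Import ProofIrrelevance Classical_Prop.
Import Order.TTheory.
Import Order.Theory.
Local Open Scope order_scope.
Set Implicit Arguments. Unset Strict Implicit.

Section Helpers.
Context {disp : Order.disp_t} {A : ctbDistrLatticeType disp}.

Lemma split_compl (h y x : A) : h `&` y <= x -> h `&` ~` y <= x -> h <= x.
Proof.
move=> h1 h2.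
have -> : h = (h `&` y) `|` (h `&` ~` y) by rewrite -meetUr joinxC meetx1.
by rewrite leUx h1 h2.
Qed.

Definition up (a : A) : A -> Prop := fun x => a <= x.

Lemma up_filter a : is_filter (up a).
Proof.
split; rewrite /up.
- exact: lex1.
- move=> x y h1 h2; exact: le_trans h1 h2.
- by move=> x y h1 h2; rewrite lexI h1 h2.
Qed.

Definition fjoin (F G : A -> Prop) : A -> Prop :=
  fun z => exists f g, F f /\ G g /\ f `&` g <= z.

Lemma fjoin_filter F G : is_filter F -> is_filter G -> is_filter (fjoin F G).
Proof.
case=> F1 Fu Fm [G1 Gu Gm]; split.
- by exists \top, \top; split=> //; split=> //; exact: lex1.
- move=> a b [f [g [Ff [Gg h]]]] ab; exists f, g; do 2 split=> //; exact: le_trans h ab.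
- move=> a b [f [g [Ff [Gg h]]]] [f' [g' [Ff' [Gg' h']]]].
  exists (f `&` f'), (g `&` g'); split; first exact: Fm.
  split; first exact: Gm.
  rewrite meetACA lexI; apply/andP; split.
  + apply: le_trans h; exact: leIl.
  + apply: le_trans h'; exact: leIr.
Qed.

Lemma fjoin_l F G a : is_filter G -> F a -> fjoin F G a.
Proof. by case=> G1 _ _ Fa; exists a, \top; do 2 split=> //; exact: leIl. Qed.

Lemma fjoin_r F G a : is_filter F -> G a -> fjoin F G a.
Proof. by case=> F1 _ _ Ga; exists \top, a; do 2 split=> //; exact: leIr. Qed.

Lemma ext_ul (G : A -> Prop) x : is_filter G -> ~ G x ->
  exists w : Ul A, (forall a, G a -> ulmem w a) /\ ~ ulmem w x.
Proof.
move=> fG nGx.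
pose T := {H : A -> Prop | is_filter H /\ (forall a, G a -> H a) /\ ~ H x}.
pose R := fun (s t : T) => `[< forall a, proj1_sig s a -> proj1_sig t a >].
have t0 : T := exist _ G (conj fG (conj (fun a h => h) nGx)).
have [[H [fH [GH nHx]]] Hmax] : exists t, premaximal R t.
  apply: (@ZL_preorder T t0 R).
  - by move=> t; apply/asboolP.
  - by move=> r s t /asboolP h1 /asboolP h2; apply/asboolP => a /h1/h2.
  - move=> C Ctot.
    pose U := fun a => G a \/ exists s : T, C s /\ proj1_sig s a.
    have fU : is_filter U.
      case: fG => G1 Gu Gm; split.
      + by left.
      + move=> a b [Ga|[s [Cs sa]]] ab; first by left; exact: Gu ab.
        right; exists s; split=> //; case: s sa {Cs} => S [[_ Su _] _] /= sa.
        exact: Su ab.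
      + move=> a b [Ga|[s [Cs sa]]] [Gb|[t [Ct tb]]].
        * by left; exact: Gm.
        * right; exists t; split=> //; case: t tb {Ct} => S [[_ _ Sm] [GS _]] /= tb.
          exact: Sm (GS _ Ga) tb.
        * right; exists s; split=> //; case: s sa {Cs} => S [[_ _ Sm] [GS _]] /= sa.
          exact: Sm sa (GS _ Gb).
        * have [/asboolP hst|/asboolP hts] := Ctot s t Cs Ct.
          - right; exists t; split=> //; move: (hst a sa) => ta.
            case: t ta tb {Ct hst} => S [[_ _ Sm] _] /= ta tb; exact: Sm.
          - right; exists s; split=> //; move: (hts b tb) => sb.
            case: s sa sb {Cs hts} => S [[_ _ Sm] _] /= sa sb; exact: Sm.
    have nUx : ~ U x.
      case=> [//|[s [_ sx]]]; case: s sx => S [_ [_ nSx]] /= sx; exact: nSx.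
    exists (exist _ U (conj fU (conj (fun a h => or_introl h) nUx))).
    by move=> s Cs; apply/asboolP => a sa /=; right; exists s.
have Hprime : forall y, H y \/ H (~` y).
  move=> y; case: (Classical_Prop.classic (H y)) => Hy; first by left.
  case: (Classical_Prop.classic (H (~` y))) => Hny; first by right.
  exfalso.
  have key : forall z, ~ H z -> exists h, H h /\ h `&` z <= x.
    move=> z nHz; case: (Classical_Prop.classic (fjoin H (up z) x)) => [[h [z' [Hh [zz' hx]]]]|nJ].
      exists h; split=> //; apply: le_trans hx; exact: leI2 (lexx _) zz'.
    exfalso; apply: nHz.
    have fJ := fjoin_filter fH (up_filter z).
    pose t := exist (fun H => is_filter H /\ (forall a, G a -> H a) /\ ~ H x)
      (fjoin H (up z)) (conj fJ (conj (fun a Ga => fjoin_l (up_filter z) (GH a Ga)) nJ)).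
    have /asboolP := Hmax t (asboolT (fun a Ha => fjoin_l (up_filter z) Ha)).
    by move=> /(_ z (fjoin_r fH (lexx z))).
  have [h1 [H1 hx1]] := key y Hy.
  have [h2 [H2 hx2]] := key _ Hny.
  apply: (nHx); have [_ Hu Hm] := fH; apply: (Hu (h1 `&` h2)); first exact: Hm.
  apply: (split_compl (y := y)).
  - apply: le_trans hx1; exact: leI2 (leIl _ _) (lexx _).
  - apply: le_trans hx2; exact: leI2 (leIr _ _) (lexx _).
have nHbot : ~ H \bot.
  by move=> Hb; apply: (nHx); have [_ Hu _] := fH; apply: Hu Hb (le0x _).
have uH : is_ultrafilter H.
  split; first by split.
  move=> F [[_ Fu Fm] nFb] HF a Fa.
  case: (Hprime a) => // Hna; exfalso; apply: nFb.
  by rewrite -(meetxC a); apply: Fm => //; apply: HF.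
by exists (exist _ H uH).
Qed.

Lemma phi_det (G : A -> Prop) x : is_filter G ->
  (forall w, phi G w -> ulmem w x) -> G x.
Proof.
move=> fG h; case: (Classical_Prop.classic (G x)) => // nGx.
by have [w [h1 h2]] := ext_ul fG nGx; exfalso; apply: h2; apply: h.
Qed.

Lemma exists_ul (y z : A) : ~ (y <= z) -> exists u : Ul A, ulmem u y /\ ~ ulmem u z.
Proof.
move=> nyz; have [u [h1 h2]] := ext_ul (up_filter y) nyz.
by exists u; split=> //; apply: h1; exact: lexx.
Qed.

Lemma exists_ulF (y z : A) : (y <= z) = false -> exists u : Ul A, ulmem u y /\ ~ ulmem u z.
Proof. by move=> E; apply: exists_ul; rewrite E. Qed.

Lemma ul_filter (u : Ul A) : is_filter (ulmem u).
Proof. exact: (proj2_sig u).1.1. Qed.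

Lemma ul_up (u : Ul A) a b : ulmem u a -> a <= b -> ulmem u b.
Proof. by case: (ul_filter u) => _ h _; apply: h. Qed.

Lemma ul_meet (u : Ul A) a b : ulmem u a -> ulmem u b -> ulmem u (a `&` b).
Proof. by case: (ul_filter u) => _ _ h; apply: h. Qed.

Arguments ul_filter u : clear implicits.
Lemma ul_top (u : Ul A) : ulmem u \top.
Proof. by case: (ul_filter u). Qed.

Lemma ul_nbot (u : Ul A) : ~ ulmem u \bot.
Proof. exact: (proj2_sig u).1.2. Qed.

Arguments ul_nbot u : clear implicits.
Arguments ul_top u : clear implicits.
Lemma ul_compl (u : Ul A) a : ulmem u a \/ ulmem u (~` a).
Proof.
case: (Classical_Prop.classic (ulmem u a)) => ua; first by left.
right.
have fJ := fjoin_filter (ul_filter u) (up_filter a).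
case: (Classical_Prop.classic (fjoin (ulmem u) (up a) \bot)) => [[c [a' [uc [aa' hb]]]]|nJ].
  apply: ul_up uc _; apply: (split_compl (y := a)).
  - apply: le_trans (le0x _); apply: le_trans hb; exact: leI2 (lexx _) aa'.
  - exact: leIr.
exfalso; apply: ua.
have [pU maxU] := proj2_sig u.
apply: (maxU (fjoin (ulmem u) (up a))) => //.
- move=> b Ub; apply: fjoin_l (up_filter a) Ub.
- apply: fjoin_r (lexx a); exact: pU.1.
Qed.

Arguments ul_compl u a : clear implicits.
Lemma ul_notboth (u : Ul A) a : ulmem u a -> ulmem u (~` a) -> False.
Proof. by move=> h1 h2; have := ul_nbot u; rewrite -(meetxC a); apply; apply: ul_meet. Qed.

Lemma ul_join (u : Ul A) a b : ulmem u (a `|` b) -> ulmem u a \/ ulmem u b.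
Proof.
move=> h; case: (ul_compl u a) => ha; first by left.
right; apply: ul_up (ul_meet ha h) _.
by rewrite meetUr meetCx join0x leIr.
Qed.

Lemma sing_iff (u : Ul A) w : singleton_Ul u w <-> phi (ulmem u) w.
Proof.
split; first by move=> -> .
move=> h.
have hw : forall a, ulmem w a -> ulmem u a.
  have [pU maxU] := proj2_sig u; move=> a wa.
  apply: (maxU (ulmem w)) => //; split; [exact: ul_filter | exact: ul_nbot].
rewrite /singleton_Ul.
case: u h hw => U pU; case: w => W pW /= h hw.
have eUW : U = W.
  apply: funext => a; apply: propext; split; [exact: h | exact: hw].
subst W; f_equal; apply: proof_irrelevance.
Qed.

Lemma full_iff (w : Ul A) : full_Ul w <-> phi (up \top) w.
Proof.
split=> // _ a ta; apply: ul_up (ul_top w) ta.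
Qed.

Lemma closed_up (c : A) : closed_Ul (phi (up c)).
Proof. exists (up c); split; [exact: up_filter | by []]. Qed.

Variable imp : A -> A -> A.
Hypothesis hA : conditional_algebra imp.

Lemma imp_mono a b c : b <= c -> imp a b <= imp a c.
Proof.
case: hA => _ hm _ bc.
by rewrite -(meet_l bc) -hm leIr.
Qed.

Lemma imp_anti a a' c : a <= a' -> imp a' c <= imp a c.
Proof.
case: hA => _ _ hj aa'.
rewrite -{1}(join_r aa'); apply: le_trans (hj _ _ _) _; exact: leIl.
Qed.

Definition Dc (u : Ul A) c : A -> Prop := fun x => ulmem u (imp c x).

Lemma Dc_filter u c : is_filter (Dc u c).
Proof.
case: hA => h1 hm _; split; rewrite /Dc.
- by rewrite h1; apply: ul_top.
- move=> a b ua ab; apply: ul_up ua _; exact: imp_mono.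
- by move=> a b ua ub; rewrite -hm; apply: ul_meet.
Qed.

Lemma Dimp_filter u F : is_filter F -> is_filter (Dimp imp u F).
Proof.
case: hA => h1 hm _; case=> F1 Fu Fm; split.
- by exists \top; split=> //; rewrite h1; apply: ul_top.
- move=> a b [c [Fc uc]] ab; exists c; split=> //; apply: ul_up uc _; exact: imp_mono.
- move=> a b [c [Fc uc]] [c' [Fc' uc']]; exists (c `&` c'); split; first exact: Fm.
  rewrite -hm; apply: ul_meet.
  + apply: ul_up uc _; apply: imp_anti; exact: leIl.
  + apply: ul_up uc' _; apply: imp_anti; exact: leIr.
Qed.

Lemma TA_use u Z v G : TA imp u Z v -> is_filter G -> (forall w, Z w <-> phi G w) ->
  forall a b, G a -> ulmem u (imp a b) -> ulmem v b.
Proof.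
move=> [F [fF [hZ dZ]]] fG hG a b Ga uab.
apply: dZ; exists a; split=> //.
apply: phi_det fF _ => w /(hZ w).2 /(hG w).1; exact.
Qed.

Lemma TA_build u Z v G : is_filter G -> (forall w, Z w <-> phi G w) ->
  (forall a b, G a -> ulmem u (imp a b) -> ulmem v b) -> TA imp u Z v.
Proof.
move=> fG hG h; exists G; split=> //; split=> //.
by move=> b [a [Ga uab]]; apply: h Ga uab.
Qed.

Lemma TA_up u v c : (forall b, ulmem u (imp c b) -> ulmem v b) -> TA imp u (phi (up c)) v.
Proof.
move=> h; apply: (TA_build (G := up c)) => //; first exact: up_filter.
move=> a b ca uab; apply: h; apply: ul_up uab _; exact: imp_anti.
Qed.

Lemma TA_up_use u v c b : TA imp u (phi (up c)) v -> ulmem u (imp c b) -> ulmem v b.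
Proof.
move=> T; apply: (TA_use T (up_filter c)) => //; exact: lexx.
Qed.

Lemma ext_Dc u c x : ~ ulmem u (imp c x) ->
  exists v : Ul A, TA imp u (phi (up c)) v /\ ~ ulmem v x.
Proof.
move=> h; have [v [h1 h2]] := ext_ul (Dc_filter u c) h.
by exists v; split=> //; apply: TA_up.
Qed.

End Helpers.

Theorem theorem9p6 (d : Order.disp_t) (A : ctbDistrLatticeType d)
  (imp : A -> A -> A) (hA : conditional_algebra imp) :
  (* (A4) *)
  ((forall a b c : A, imp a b <= imp c (imp a b)) <->
   (forall (u v w : Ul A) (Y Z : Ul A -> Prop), closed_Ul Y -> closed_Ul Z ->
      TA imp u Y v -> TA imp v Z w -> TA imp u Z w)) /\
  (* (A5) *)
  ((forall a b : A, a `&` imp a b <= b) <->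
   (forall u : Ul A, TA imp u (singleton_Ul u) u)) /\
  (* (A6) *)
  ((forall a b : A, imp a b <= imp (~` b) (~` a)) <->
   (forall (u v : Ul A) (Y : Ul A -> Prop), closed_Ul Y ->
      TA imp u Y v -> exists w, Y w /\ TA imp u (singleton_Ul v) w)) /\
  (* (A7) *)
  ((forall a b c : A, ~` (imp a b) <= imp c (~` (imp a b))) <->
   (forall (u v w : Ul A) (Y Z : Ul A -> Prop), closed_Ul Y -> closed_Ul Z ->
      TA imp u Y v -> TA imp u Z w -> TA imp v Z w)) /\
  (* (A8) *)
  ((forall a b c : A, imp \top (~` a `|` b) `&` imp b c <= imp a c) <->
   (forall (u v : Ul A) (Y Z : Ul A -> Prop), closed_Ul Y -> closed_Ul Z ->
      TA imp u Y v ->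
      (forall w, TAset imp u full_Ul w -> Y w -> Z w) ->
      TA imp u Z v)).
Proof.
split; [|split; [|split; [|split]]].
-
  split.
  + move=> H u v w Y Z _ _ [FY [fY [hY dY]]] [FZ [fZ [hZ dZ]]].
    exists FZ; split=> //; split=> //.
    move=> b [a [FZa ua]]; apply: dZ; exists a; split=> //.
    apply: dY; exists \top; split; first by case: fY.
    exact: ul_up ua (H a b \top).
  + move=> H a b c; case E: (imp a b <= imp c (imp a b)) => //; exfalso.
    have [u [u1 u2]] := exists_ulF E.
    have [v [Tv v2]] := ext_Dc hA u2.
    have [w [Tw w2]] := ext_Dc hA v2.
    have := H u v w _ _ (closed_up c) (closed_up a) Tv Tw.
    by move=> T; exact: w2 (TA_up_use T u1).
-
  split.
  + move=> H u; apply: (TA_build (G := ulmem u)); first exact: ul_filter.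
      by move=> w; apply: sing_iff.
    move=> a b ua uab; apply: ul_up (ul_meet ua uab) (H a b).
  + move=> H a b; case E: (a `&` imp a b <= b) => //; exfalso.
    have [u [u1 u2]] := exists_ulF E.
    apply: u2; apply: (TA_use (H u) (ul_filter u) (@sing_iff _ _ u) (a := a)).
    * exact: ul_up u1 (leIl _ _).
    * exact: ul_up u1 (leIr _ _).
-
  split.
  + move=> H u v Y _ [F [fF [hY dY]]].
    pose D := Dimp imp u (ulmem v).
    have fD : is_filter D by apply: Dimp_filter => //; exact: ul_filter.
    have fJ := fjoin_filter fF fD.
    have nJ : ~ fjoin F D \bot.
      move=> [f [y [Ff [[c [vc ucy]] fy]]]].
      have yf : y <= ~` f.
        apply: (split_compl (y := f)).
        * apply: le_trans (le0x _); by rewrite meetC.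
        * exact: leIr.
      have : ulmem u (imp f (~` c)).
        rewrite -{1}(complK f); apply: ul_up (H c (~` f)).
        apply: ul_up ucy _; exact: imp_mono.
      move=> ufc; have : ulmem v (~` c) by apply: dY; exists f.
      exact: ul_notboth vc.
    have [w [w1 _]] := ext_ul fJ nJ.
    exists w; split.
    * apply/(hY w) => a Fa; apply: w1; exact: fjoin_l.
    * apply: (TA_build (G := ulmem v)) => //; first exact: ul_filter.
        by move=> w'; apply: sing_iff.
      move=> a b va uab; apply: w1; apply: fjoin_r => //; by exists a.
  + move=> H a b; case E: (imp a b <= imp (~` b) (~` a)) => //; exfalso.
    have [u [u1 u2]] := exists_ulF E.
    have [v [Tv v2]] := ext_Dc hA u2.
    have [w [Yw Tw]] := H u v _ (closed_up _) Tv.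
    have wb : ulmem w (~` b) by apply: Yw; exact: lexx.
    have va : ulmem v a by case: (ul_compl v a).
    apply: (ul_notboth _ wb).
    exact: (TA_use Tw (ul_filter v) (@sing_iff _ _ v) va u1).
-
  split.
  + move=> H u v w Y Z _ _ [FY [fY [hY dY]]] [FZ [fZ [hZ dZ]]].
    exists FZ; split=> //; split=> //.
    move=> b [a [FZa vab]].
    case: (Classical_Prop.classic (ulmem w b)) => // nwb; exfalso.
    have nuab : ~ ulmem u (imp a b) by move=> uab; apply: nwb; apply: dZ; exists a.
    have un : ulmem u (~` imp a b) by case: (ul_compl u (imp a b)).
    have : ulmem v (~` imp a b).
      apply: dY; exists \top; split; first by case: fY.
      exact: ul_up un (H a b \top).
    exact: ul_notboth vab.
  + move=> H a b c; case E: (~` imp a b <= imp c (~` imp a b)) => //; exfalso.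
    have [u [u1 u2]] := exists_ulF E.
    have [v [Tv v2]] := ext_Dc hA u2.
    have vab : ulmem v (imp a b) by case: (ul_compl v (imp a b)).
    have nuab : ~ ulmem u (imp a b) by move=> h; exact: ul_notboth h u1.
    have [w [Tw w2]] := ext_Dc hA nuab.
    have := H u v w _ _ (closed_up c) (closed_up a) Tv Tw.
    by move=> T; exact: w2 (TA_up_use T vab).
-
  split.
  + move=> H u v Y Z _ [FZ [fZ hZ]] [FY [fY [hY dY]]] HRZ.
    exists FZ; split=> //; split=> //.
    move=> c [a [FZa uac]].
    have fE := Dc_filter hA u \top.
    have fJ := fjoin_filter fE fY.
    have Ja : fjoin (Dc imp u \top) FY a.
      apply: phi_det fJ _ => w Jw.
      have Zw : Z w.
        apply: HRZ.
        * apply: (TA_build (G := up \top)); first exact: up_filter.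
            by move=> w'; apply: full_iff.
          move=> a' b' ta' uab; apply: Jw; apply: fjoin_l => //.
          have ea : a' = \top by apply/le_anti; rewrite lex1; exact: ta'.
          by rewrite /Dc -ea.
        * apply/(hY w) => x Fx; apply: Jw; exact: fjoin_r.
      by apply: (hZ w).1.
    case: Ja => [e [f [ue [Ff efa]]]].
    apply: dY; exists f; split=> //.
    apply: ul_up (H f a c); apply: ul_meet => //.
    apply: ul_up ue _; apply: imp_mono hA _ _ _ _.
    apply: (split_compl (y := f)).
    * apply: le_trans efa _; exact: leUr.
    * apply: le_trans (leIr _ _) _; exact: leUl.
  + move=> H a b c; case E: (imp \top (~` a `|` b) `&` imp b c <= imp a c) => //; exfalso.
    have [u [u1 u2]] := exists_ulF E.
    have [v [Tv v2]] := ext_Dc hA u2.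
    apply: v2; apply: (TA_up_use (c := b)); last exact: ul_up u1 (leIr _ _).
    apply: (H u v _ _ (closed_up a) (closed_up b) Tv).
    move=> w Tw Yw.
    have wab : ulmem w (~` a `|` b).
      apply: (TA_use Tw (up_filter \top) (@full_iff _ _) (a := \top)); first exact: lexx.
      exact: ul_up u1 (leIl _ _).
    have wa : ulmem w a by apply: Yw; exact: lexx.
    case: (ul_join wab) => [wna|wb]; first by exfalso; exact: ul_notboth wa wna.
    by move=> x bx; apply: ul_up wb bx.
Qed.
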